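(* Let $m,n$ be positive integers with $m\ge n$. Then there exists a private information distinguishing debate game $B=(A,S,P,C_w,C_l)$ such that $|C_w(s)|\ge m$ and $|C_l(s)|\le n$ for all $s\in S$, but $e^{\mathrm{PIDDG}}_B(M)\ge\frac{n}{2m}$ for every policy $M$.
   Context: Let $\delta$ be a special default action. A PIDDG is a tuple $(A,S,P,C_w,C_l)$ with $A$ finite, $\delta\notin A$, $S$ finite, $P$ a probability mass function on $S$, and $C_w,C_l:S\to\mathcal P(A)$. A policy is $M:\{1,2\}\times(A\cup\{\delta\})^2\to[0,1]$ with $M(1,a_1,a_2)+M(2,a_1,a_2)=1$. $G_1(B,M)$ is the following Bayesian game with agents $1,2$. Each agent has action set $A\cup\{\delta\}$ and type set $\mathcal P(A)$. A scenario $s\sim P$ is drawn, and agent 1 gets type $C_w(s)$ while agent 2 gets type $C_l(s)$. Payoffs are as follows: - if both agents play available actions ($a_i\in t_i\cup\{\delta\}$), agent $i$ gets $M(i,a_1,a_2)$; - if exactly one plays an unavailable action, it gets $0$ and the other gets $1$; - if both play unavailable actions, each gets $1/2$. $G_2(B,M)$ is the same with types swapped. The error is $e^{\mathrm{PIDDG}}_B(M)=\frac{v_1(G_2(B,M))+v_2(G_1(B,M))}{2}$, where $v_i$ is the value of the zero-sum Bayesian game to agent $i$. *)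

(* Defs.v *)
From HB Require Import structures.
From mathcomp Require Import all_boot all_order all_algebra.
From mathcomp Require Import boolp classical_sets reals.
Set Implicit Arguments. Unset Strict Implicit. Unset Printing Implicit Defensive.
Import Order.TTheory GRing.Theory Num.Theory.
Local Open Scope ring_scope.
Local Open Scope classical_set_scope.

Inductive agent := Ag1 | Ag2.

Section PIDDG.
Variable R : realType.
Variable A : finType.
(* Actions are [option A]; [None] is the default action delta. *)
Variable S : finType.

Definition is_pmf (P : S -> R) : Prop :=
  (forall s, 0 <= P s) /\ \sum_(s : S) P s = 1.

Definition is_policy (M : agent -> option A -> option A -> R) : Prop :=
  (forall i a1 a2, 0 <= M i a1 a2 <= 1) /\
  (forall a1 a2, M Ag1 a1 a2 + M Ag2 a1 a2 = 1).

Definition available (t : {set A}) (a : option A) : bool :=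
  if a is Some x then x \in t else true.

Definition payoff (M : agent -> option A -> option A -> R)
  (t1 t2 : {set A}) (i : agent) (a1 a2 : option A) : R :=
  match available t1 a1, available t2 a2 with
  | true, true => M i a1 a2
  | false, true => if i is Ag1 then 0 else 1
  | true, false => if i is Ag1 then 1 else 0
  | false, false => 1 / 2
  end.

Definition is_strategy (sg : {set A} -> option A -> R) : Prop :=
  forall t, (forall a, 0 <= sg t a) /\ \sum_(a : option A) sg t a = 1.

Definition exp_payoff (P : S -> R) (T1 T2 : S -> {set A})
  (M : agent -> option A -> option A -> R) (i : agent)
  (sg1 sg2 : {set A} -> option A -> R) : R :=
  \sum_(s : S) P s * \sum_(a1 : option A) \sum_(a2 : option A)
     sg1 (T1 s) a1 * sg2 (T2 s) a2 * payoff M (T1 s) (T2 s) i a1 a2.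

Definition game_value (P : S -> R) (T1 T2 : S -> {set A})
  (M : agent -> option A -> option A -> R) (i : agent) : R :=
  match i with
  | Ag1 => sup [set x | exists sg1, is_strategy sg1 /\
             x = inf [set y | exists sg2, is_strategy sg2 /\
                        y = exp_payoff P T1 T2 M Ag1 sg1 sg2]]
  | Ag2 => sup [set x | exists sg2, is_strategy sg2 /\
             x = inf [set y | exists sg1, is_strategy sg1 /\
                        y = exp_payoff P T1 T2 M Ag2 sg1 sg2]]
  end.

(* e_B(M) = (v_1(G_2(B,M)) + v_2(G_1(B,M))) / 2, where G_1 gives agent 1
   type C_w(s) and agent 2 type C_l(s), and G_2 swaps them. *)
Definition piddg_error (P : S -> R) (Cw Cl : S -> {set A})
  (M : agent -> option A -> option A -> R) : R :=
  (game_value P Cl Cw M Ag1 + game_value P Cw Cl M Ag2) / 2.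

End PIDDG.

(* Main.v *)
Require Import Defs.
From mathcomp Require Import all_boot all_order all_algebra.
From mathcomp Require Import boolp classical_sets reals.
From mathcomp Require Import lra ring.
Set Implicit Arguments. Unset Strict Implicit. Unset Printing Implicit Defensive.
Import Order.TTheory GRing.Theory Num.Theory.
Local Open Scope ring_scope.
Local Open Scope classical_set_scope.

Section Alt.
Variable R : realFieldType.

Lemma sum_ind (I : finType) (a : I) (g : I -> R) :
  \sum_i (i == a)%:R * g i = g a.
Proof.
rewrite (bigD1 a) //= eqxx mul1r big1 ?addr0 // => i /negbTE ->.
by rewrite mul0r.
Qed.

Lemma sum_ge_term (I : finType) (F : I -> R) a :
  (forall i, 0 <= F i) -> F a <= \sum_i F i.
Proof. by move=> h; rewrite (bigD1 a) //= lerDl sumr_ge0. Qed.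

Definition feasible (I J : finType) (B : I -> J -> R) :=
  exists q : J -> R, (forall j, 0 <= q j) /\ forall i, 0 < \sum_j B i j * q j.
Definition certif (I J : finType) (B : I -> J -> R) :=
  exists c : I -> R, (forall i, 0 <= c i) /\ (exists i, 0 < c i) /\
     forall j, \sum_i c i * B i j <= 0.

Lemma alt_ind (J : finType) (n : nat) : forall (K : {set J}), #|K| = n ->
  forall (I : finType) (B : I -> J -> R), (forall i j, j \notin K -> B i j = 0) ->
  feasible B \/ certif B.
Proof.
elim: n => [|n IH] K cK I B supp.
  have B0 : forall i j, B i j = 0.
    by move=> i j; apply: supp; move/eqP: cK; rewrite cards_eq0 => /eqP ->; rewrite inE.
  case: (pickP I) => [i0 _|I0].
    right; exists (fun _ => 1); split=> [i|]; first exact: ler01.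
    split; first by exists i0; exact: ltr01.
    by move=> j; rewrite big1 // => i _; rewrite B0 mulr0.
  left; exists (fun _ => 0); split=> // i; by have := I0 i.
have : (0 < #|K|)%N by rewrite cK.
rewrite card_gt0 => /set0Pn [k kK].
have cK' : #|K :\ k| = n by move: cK; rewrite (cardsD1 k) kK => [[]].
pose Z := {i : I | B i k <= 0}.
pose PN := {p : I * I | (0 < B p.1 k) && (B p.2 k < 0)}.
pose I' := (Z + PN)%type.
pose w (i' : I') (i : I) : R := match i' with
  | inl z => (i == val z)%:R
  | inr p => (i == (val p).1)%:R * (- B (val p).2 k) + (i == (val p).2)%:R * B (val p).1 k
  end.
pose B' (i' : I') (j : J) : R := if j == k then 0 else \sum_i w i' i * B i j.
have supp' : forall i' j, j \notin K :\ k -> B' i' j = 0.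
  move=> i' j; rewrite /B' in_setD1 negb_and negbK; case: eqP => //= _ jK.
  by rewrite big1 // => i _; rewrite supp ?mulr0.
have w_ge0 : forall i' i, 0 <= w i' i.
  move=> [z|[[f g] /= /andP [hf hg]]] i /=; first by rewrite ler0n.
  by rewrite addr_ge0 // mulr_ge0 ?ler0n // ?oppr_ge0 ltW.
have sumw : forall i' (g : I -> R), \sum_i w i' i * g i =
   match i' with inl z => g (val z)
   | inr p => g (val p).1 * (- B (val p).2 k) + g (val p).2 * B (val p).1 k end.
  move=> [z|p] g /=; first exact: sum_ind.
  under eq_bigr do rewrite mulrDl -!mulrA.
  by rewrite big_split /= !sum_ind mulrC [g (val p).2 * _]mulrC.
case: (IH _ cK' I' B' supp') => [[q' [q'0 hq']]|[c' [c'0 [[i0 ci0] hc']]]].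
-
  pose s i := \sum_j (if j == k then 0 else B i j) * q' j.
  have hs : forall i', 0 < \sum_i w i' i * s i.
    move=> i'; have := hq' i'; congr (0 < _).
    rewrite /B' /s.
    under [RHS]eq_bigr do rewrite mulr_sumr.
    rewrite [RHS]exchange_big /=; apply: eq_bigr => j _.
    case: eqP => _; last by rewrite mulr_suml; apply: eq_bigr => i _; rewrite mulrA.
    by rewrite mul0r big1 // => i _; rewrite ?mul0r ?mulr0.
  have hsZ : forall i, B i k <= 0 -> 0 < s i.
    by move=> i hi; have := hs (inl (exist _ i hi)); rewrite sumw.
  have hsP : forall f g, 0 < B f k -> B g k < 0 ->
       0 < s f * (- B g k) + s g * B f k.
    move=> f g hf hg.
    have hp : (0 < B (f, g).1 k) && (B (f, g).2 k < 0) by rewrite hf hg.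
    by have := hs (inr (exist _ (f, g) hp)); rewrite sumw.
  pose lo := \big[Num.max/0]_(i | 0 < B i k) (- s i / B i k).
  pose hi := \big[Num.min/(lo + 2)]_(i | B i k < 0) (s i / (- B i k)).
  have lo0 : 0 <= lo.
    rewrite /lo; elim/big_rec: _ => // i x _ hx; rewrite le_max hx orbT //.
  have loP : forall f, 0 < B f k -> - s f / B f k <= lo.
    by move=> f hf; rewrite /lo (bigD1 f) //= le_max lexx.
  have hiP : forall g, B g k < 0 -> hi <= s g / (- B g k).
    by move=> g hg; rewrite /hi (bigD1 g) //= ge_min lexx.
  have lohi : lo < hi.
    rewrite /hi; apply: (big_ind (fun y => lo < y)).
    - by rewrite ltrDl ltr0Sn.
    - by move=> x y hx hy; rewrite lt_min hx hy.
    move=> g hg; have sg : 0 < s g by apply: hsZ; rewrite ltW.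
    have ng : 0 < - B g k by rewrite oppr_gt0.
    rewrite /lo; apply: (big_ind (fun y => y < s g / (- B g k))).
    - by rewrite divr_gt0.
    - by move=> x y hx hy; rewrite gt_max hx hy.
    move=> f hf; rewrite ltr_pdivrMr // mulrAC ltr_pdivlMr //.
    have := hsP f g hf hg; lra.
  pose t := (lo + hi) / 2.
  have lot : lo < t by rewrite /t; lra.
  have thi : t < hi by rewrite /t; lra.
  left; exists (fun j => if j == k then t else q' j); split.
    by move=> j; case: eqP => _ //; lra.
  move=> i.
  have -> : \sum_j B i j * (if j == k then t else q' j) = s i + B i k * t.
    rewrite /s (bigD1 k) //= [in RHS](bigD1 k) //= eqxx mul0r add0r addrC.
    congr (_ + _); apply: eq_bigr => j /negbTE ->; done.
  case: (ltrgtP (B i k) 0) => hk.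
  + have := hiP i hk; have ng : 0 < - B i k by rewrite oppr_gt0.
    rewrite ler_pdivlMr // => h.
    have : t * (- B i k) < s i.
      apply: (@lt_le_trans _ _ (hi * - B i k)) => //; by rewrite ltr_pM2r.
    lra.
  + have := loP i hk; rewrite ler_pdivrMr // => h.
    have : lo * B i k < t * B i k by rewrite ltr_pM2r.
    lra.
  + by rewrite hk mul0r addr0; apply: hsZ; rewrite hk.
-
  right; exists (fun i => \sum_i' c' i' * w i' i); split.
    by move=> i; apply: sumr_ge0 => i' _; rewrite mulr_ge0.
  split.
    case: i0 ci0 => [z|p] ci0.
      exists (val z); apply: (lt_le_trans _ (@sum_ge_term _ (fun i' => c' i' * w i' (val z)) (inl z) _)).
        by rewrite /= eqxx mulr1.
      by move=> i'; rewrite mulr_ge0.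
    case: p ci0 => [[f g] hp] ci0; have /andP [hf hg] := hp.
    exists f; apply: (lt_le_trans _ (@sum_ge_term _ (fun i' => c' i' * w i' f) (inr (exist _ (f, g) hp)) _)).
      rewrite /= eqxx mul1r.
      rewrite mulr_gt0 // ltr_wpDr //; first by rewrite mulr_ge0 ?ler0n ?ltW.
      by rewrite oppr_gt0.
    by move=> i'; rewrite mulr_ge0.
  move=> j.
  under eq_bigr do rewrite mulr_suml.
  rewrite exchange_big /=.
  under eq_bigr do (under eq_bigr do rewrite -mulrA; rewrite -mulr_sumr).
  case: (eqVneq j k) => [->|jk].
    apply: sumr_le0 => i' _; apply: mulr_ge0_le0 => //.
    rewrite sumw; case: i' => [[z hz]|[[f g] /= _]] //=.
    by rewrite mulrN mulrC addrC subrr.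
  by have := hc' j; rewrite /B' (negbTE jk).
Qed.
End Alt.

Definition dist (R : realType) (I : finType) (p : I -> R) :=
  (forall a, 0 <= p a) /\ \sum_a p a = 1.

Lemma normalize (R : realType) (I : finType) (q : I -> R) :
  (forall a, 0 <= q a) -> 0 < \sum_a q a -> dist (fun a => q a / \sum_b q b).
Proof.
move=> q0 s0; split=> [a|]; first by rewrite divr_ge0 // ltW.
by rewrite -mulr_suml mulfV // gt_eqF.
Qed.

Lemma eps_minimax (R : realType) (I : finType) (N : I -> I -> R) (i0 : I) :
  (forall x a, 0 <= N x a <= 1) -> forall eps : R, 0 < eps ->
  exists c (p q : I -> R), dist p /\ dist q /\
   (forall x, c <= \sum_a N x a * q a) /\ (forall y, \sum_a p a * N a y <= c + eps).
Proof.
move=> N01 eps e0.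
pose S := [set c : R | exists q, dist q /\ forall x, c < \sum_a N x a * q a].
have d0 : dist (fun a : I => (a == i0)%:R : R).
  split=> [a|]; first by rewrite ler0n.
  by rewrite (bigD1 i0) //= eqxx big1 ?addr0 // => a /negbTE ->.
have S1 : S (-1).
  exists (fun a : I => (a == i0)%:R); split=> // x.
  apply: (@lt_le_trans _ _ 0); first by rewrite ltrN10.
  by apply: sumr_ge0 => a _; rewrite mulr_ge0 ?ler0n //; case/andP: (N01 x a).
have Sub : forall c, S c -> c < 1.
  move=> c [q [[q0 q1] hq]]; apply: (lt_le_trans (hq i0)); rewrite -q1.
  apply: ler_sum => a _; rewrite ler_piMl //; by case/andP: (N01 i0 a).
have hS : has_sup S.
  split; first by exists (-1).
  by exists 1 => c /Sub /ltW.
have e2 : 0 < eps / 2 by rewrite divr_gt0.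
have [c1 Sc1 hc1] := sup_adherent e2 hS.
pose c2 := sup S + eps / 2.
have nS2 : ~ S c2.
  move=> Sc2; have := sup_upper_bound hS Sc2; rewrite /c2; lra.
have := @alt_ind R I #|[set: I]%SET| [set: I]%SET erefl I (fun x a => N x a - c2).
case=> [|[q [q0 hq]]|[c [c0 [[i1 ci1] hc]]]].
- by move=> i j; rewrite inE.
- exfalso; apply: nS2.
  have sq : 0 < \sum_a q a.
    rewrite lt_def sumr_ge0 // andbT; apply/negP => /eqP /psumr_eq0P hq0.
    have := hq i0; rewrite big1 ?ltxx // => a _; rewrite hq0 ?mulr0 //.
  exists (fun a => q a / \sum_b q b); split; first exact: normalize.
  move=> x; have := hq x.
  under eq_bigr do rewrite mulrBl.
  rewrite sumrB -mulr_sumr subr_gt0 => h.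
  under eq_bigr do rewrite mulrA.
  by rewrite -mulr_suml ltr_pdivlMr.
- have sc : 0 < \sum_x c x by apply: (lt_le_trans ci1); exact: sum_ge_term.
  case: Sc1 => q [dq hq].
  exists c1, (fun a => c a / \sum_b c b), q; split; first exact: normalize.
  split=> //; split; first by move=> x; apply: ltW.
  move=> y; have := hc y.
  under eq_bigr do rewrite mulrBr.
  rewrite sumrB -mulr_suml subr_le0 => h.
  under eq_bigr do rewrite mulrAC.
  rewrite -mulr_suml ler_pdivrMr //.
  apply: (le_trans h); rewrite mulrC ler_pM2r //; rewrite /c2; lra.
Qed.

Section Main.
Variable R : realType.

Lemma payoff01 (A : finType) (M : agent -> option A -> option A -> R) t1 t2 i a1 a2 :
  is_policy M -> 0 <= payoff M t1 t2 i a1 a2 <= 1.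
Proof.
move=> [hM _]; rewrite /payoff.
case: (available t1 a1); case: (available t2 a2) => //; try (case: i => //; rewrite ?lexx ?ler01 //).
all: by apply/andP; split; lra.
Qed.

Lemma exp01 (A S : finType) (P : S -> R) T1 T2 (M : agent -> option A -> option A -> R) i sg1 sg2 :
  is_pmf P -> is_policy M -> is_strategy sg1 -> is_strategy sg2 ->
  0 <= exp_payoff P T1 T2 M i sg1 sg2 <= 1.
Proof.
move=> [P0 P1] hM h1 h2; rewrite /exp_payoff; apply/andP; split.
  apply: sumr_ge0 => s _; apply: mulr_ge0 => //; apply: sumr_ge0 => a1 _.
  apply: sumr_ge0 => a2 _; have /andP [p0 _] := payoff01 (T1 s) (T2 s) i a1 a2 hM.
  by rewrite !mulr_ge0 //; [case: (h1 (T1 s)) | case: (h2 (T2 s))].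
rewrite -P1; apply: ler_sum => s _; rewrite ler_piMr //.
have [g1 s1] := h1 (T1 s); have [g2 s2] := h2 (T2 s).
apply: (@le_trans _ _ (\sum_a1 \sum_a2 sg1 (T1 s) a1 * sg2 (T2 s) a2)).
  apply: ler_sum => a1 _; apply: ler_sum => a2 _.
  have /andP [p0 p1] := payoff01 (T1 s) (T2 s) i a1 a2 hM.
  by rewrite ler_piMr // mulr_ge0.
by under eq_bigr do rewrite -mulr_sumr s2 mulr1; rewrite s1.
Qed.

Definition dflt (A : finType) (t : {set A}) (a : option A) : R := (a == None)%:R.

Lemma dflt_strat (A : finType) : is_strategy (@dflt A).
Proof.
move=> t; split=> [a|]; first by rewrite /dflt ler0n.
by rewrite /dflt (bigD1 None) //= big1 ?addr0 // => a /negbTE ->.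
Qed.

Lemma val2_lb (A S : finType) (P : S -> R) T1 T2 (M : agent -> option A -> option A -> R) b :
  is_pmf P -> is_policy M ->
  (exists sg2, is_strategy sg2 /\ forall sg1, is_strategy sg1 ->
     b <= exp_payoff P T1 T2 M Ag2 sg1 sg2) -> b <= game_value P T1 T2 M Ag2.
Proof.
move=> hP hM [sg2 [hs2 hb]]; rewrite /game_value.
have infle : forall sg, is_strategy sg ->
   inf [set y | exists sg1, is_strategy sg1 /\ y = exp_payoff P T1 T2 M Ag2 sg1 sg] <= 1.
  move=> sg hs; apply: (@le_trans _ _ (exp_payoff P T1 T2 M Ag2 (@dflt A) sg)).
    apply: ge_inf; last by exists (@dflt A); split => //; exact: dflt_strat.
    exists 0 => y [sg1 [h1 ->]].
    by have /andP [] := exp01 T1 T2 Ag2 hP hM h1 hs.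
  by have /andP [] := exp01 T1 T2 Ag2 hP hM (@dflt_strat A) hs.
apply: (@le_trans _ _ (inf [set y | exists sg1, is_strategy sg1 /\ y = exp_payoff P T1 T2 M Ag2 sg1 sg2])).
  apply: lb_le_inf.
    by exists (exp_payoff P T1 T2 M Ag2 (@dflt A) sg2); exists (@dflt A); split => //; exact: dflt_strat.
  by move=> y [sg1 [h1 ->]]; exact: hb.
apply: sup_upper_bound; last by exists sg2.
split; first by exists (inf [set y | exists sg1, is_strategy sg1 /\ y = exp_payoff P T1 T2 M Ag2 sg1 sg2]); exists sg2.
by exists 1 => x [sg [hs ->]]; exact: infle.
Qed.

Lemma val1_lb (A S : finType) (P : S -> R) T1 T2 (M : agent -> option A -> option A -> R) b :
  is_pmf P -> is_policy M ->
  (exists sg1, is_strategy sg1 /\ forall sg2, is_strategy sg2 ->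
     b <= exp_payoff P T1 T2 M Ag1 sg1 sg2) -> b <= game_value P T1 T2 M Ag1.
Proof.
move=> hP hM [sg1 [hs1 hb]]; rewrite /game_value.
have infle : forall sg, is_strategy sg ->
   inf [set y | exists sg2, is_strategy sg2 /\ y = exp_payoff P T1 T2 M Ag1 sg sg2] <= 1.
  move=> sg hs; apply: (@le_trans _ _ (exp_payoff P T1 T2 M Ag1 sg (@dflt A))).
    apply: ge_inf; last by exists (@dflt A); split => //; exact: dflt_strat.
    exists 0 => y [sg2 [h2 ->]].
    by have /andP [] := exp01 T1 T2 Ag1 hP hM hs h2.
  by have /andP [] := exp01 T1 T2 Ag1 hP hM hs (@dflt_strat A).
apply: (@le_trans _ _ (inf [set y | exists sg2, is_strategy sg2 /\ y = exp_payoff P T1 T2 M Ag1 sg1 sg2])).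
  apply: lb_le_inf.
    by exists (exp_payoff P T1 T2 M Ag1 sg1 (@dflt A)); exists (@dflt A); split => //; exact: dflt_strat.
  by move=> y [sg2 [h2 ->]]; exact: hb.
apply: sup_upper_bound; last by exists sg1.
split; first by exists (inf [set y | exists sg2, is_strategy sg2 /\ y = exp_payoff P T1 T2 M Ag1 sg1 sg2]); exists sg1.
by exists 1 => x [sg [hs ->]]; exact: infle.
Qed.

End Main.

Section Constr.
Variable R : realType.
Variables k n : nat.
Hypothesis hn : (0 < n)%N.
Hypothesis hnk : (n <= k.+1)%N.

Local Notation A := 'I_k.+1.

Lemma sum_opt (f : option A -> R) :
  \sum_(a : option A) f a = f None + \sum_(b : A) f (Some b).
Proof.
rewrite (bigD1 None) //=; congr (_ + _).
rewrite (reindex Some) /=; last first.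
  by exists (odflt ord0) => [x _|[x|] //].
by apply: eq_bigl.
Qed.

Lemma cnt0 : (\sum_(d : A | (val d < n)%N) 1 = n)%N.
Proof. by rewrite big_ord_narrow // sum_nat_const card_ord muln1. Qed.

Lemma cnt1 (s : A) : (\sum_(a : A | (val (a - s)%R < n)%N) 1 = n)%N.
Proof.
have inj : injective (fun d : A => d + s) by move=> x y /addIr.
rewrite (reindex_inj inj).
under eq_bigl do rewrite addrK.
exact: cnt0.
Qed.

Lemma cnt2 (a : A) : (\sum_(s : A | (val (a - s)%R < n)%N) 1 = n)%N.
Proof.
have inj : injective (fun d : A => a - d).
  by move=> x y /addrI /oppr_inj.
rewrite (reindex_inj inj).
under eq_bigl do rewrite opprB addrC subrK.
exact: cnt0.
Qed.

Definition Cl (s : A) : {set A} := [set a : A | (val (a - s)%R < n)%N].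
Definition Pk (s : A) : R := (k.+1)%:R^-1.

Lemma card_Cl s : #|Cl s| = n.
Proof. by rewrite -sum1_card -(cnt1 s); apply: eq_bigl => a; rewrite inE. Qed.

Lemma sum_Cl (a : A) : \sum_s ((a \in Cl s)%:R : R) = n%:R.
Proof.
rewrite -(cnt2 a) natr_sum [RHS]big_mkcond; apply: eq_bigr => s _.
by rewrite inE; case: ifP.
Qed.

Lemma Pk_pmf : is_pmf Pk.
Proof.
split=> [s|]; first by rewrite /Pk invr_ge0 ler0n.
by rewrite /Pk sumr_const card_ord -(mulr_natl (k.+1%:R^-1)) mulfV // pnatr_eq0.
Qed.

Definition tau (q : option A -> R) (t : {set A}) (a : option A) : R :=
  match a with
  | None => 1 - \sum_(b in t) q (Some b)
  | Some b => (b \in t)%:R * q (Some b)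
  end.

Lemma sub_sum (q : option A -> R) (t : {set A}) : dist q ->
  q None + \sum_(b in t) q (Some b) <= 1.
Proof.
move=> [q0 q1]; rewrite -q1 sum_opt lerD2l big_mkcond /=.
by apply: ler_sum => b _; case: ifP.
Qed.

Lemma tau_strat q : dist q -> is_strategy (tau q).
Proof.
move=> dq t; have [q0 q1] := dq; split.
  case=> [b|] /=; first by rewrite mulr_ge0 ?ler0n.
  have := sub_sum t dq; have := q0 None; lra.
rewrite sum_opt /=.
have -> : \sum_b (b \in t)%:R * q (Some b) = \sum_(b in t) q (Some b).
  by rewrite [RHS]big_mkcond; apply: eq_bigr => b _; case: ifP; rewrite ?mul1r ?mul0r.
lra.
Qed.

Lemma tau_key q a : dist q ->
  n%:R / k.+1%:R * q a <= \sum_s Pk s * tau q (Cl s) a.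
Proof.
move=> dq; have [q0 q1] := dq.
have k0 : 0 < k.+1%:R :> R by rewrite ltr0n.
case: a => [b|] /=.
  under eq_bigr do rewrite mulrA.
  rewrite -mulr_suml; under eq_bigr do rewrite /Pk mulrC.
  rewrite -mulr_suml sum_Cl /Pk.
  by rewrite mulrC mulrA lexx.
apply: (@le_trans _ _ (q None)).
  rewrite ler_piMl //; rewrite ler_pdivrMr // mul1r ler_nat //.
apply: (@le_trans _ _ (\sum_(s : A) Pk s * q None)).
  by rewrite -mulr_suml (proj2 Pk_pmf) mul1r.
apply: ler_sum => s _; rewrite ler_pM2l ?(invr_gt0) //.
have := sub_sum (Cl s) dq; lra.
Qed.

Lemma liar_lb (F : option A -> option A -> R) (sg : option A -> R) q :
  dist q -> (forall x a, 0 <= F x a) -> (forall x, 0 <= sg x) ->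
  n%:R / k.+1%:R * \sum_x sg x * \sum_a q a * F x a <=
  \sum_s Pk s * \sum_x \sum_a sg x * tau q (Cl s) a * F x a.
Proof.
move=> dq F0 s0.
have -> : \sum_s Pk s * \sum_x \sum_a sg x * tau q (Cl s) a * F x a =
   \sum_x \sum_a sg x * F x a * (\sum_s Pk s * tau q (Cl s) a).
  transitivity (\sum_s \sum_x \sum_a Pk s * (sg x * tau q (Cl s) a * F x a)).
    by apply: eq_bigr => s _; rewrite mulr_sumr; apply: eq_bigr => x _; rewrite mulr_sumr.
  rewrite exchange_big; apply: eq_bigr => x _; rewrite exchange_big.
  apply: eq_bigr => a _; rewrite mulr_sumr; apply: eq_bigr => s _; ring.
rewrite mulr_sumr; apply: ler_sum => x _.
rewrite mulr_sumr mulr_sumr; apply: ler_sum => a _.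
have -> : n%:R / k.+1%:R * (sg x * (q a * F x a)) = sg x * F x a * (n%:R / k.+1%:R * q a) by ring.
by apply: ler_wpM2l; [rewrite mulr_ge0 | exact: tau_key].
Qed.

End Constr.

Lemma pay_helper (R : realType) (x y z : R) (bb : bool) :
  x * (bb%:R * y) * (if bb then z else 0) = x * (bb%:R * y) * z.
Proof. destruct bb; simpl; ring. Qed.

Lemma pay_helper2 (R : realType) (x y z : R) (bb : bool) :
  (bb%:R * y) * x * (if bb then z else 0) = x * (bb%:R * y) * z.
Proof. destruct bb; simpl; ring. Qed.

Lemma swap3 (R : realType) (x y z : R) : x * y * z = y * x * z.
Proof. ring. Qed.

Theorem theorem5p5 (R : realType) (m n : nat) (hn : (0 < n)%N) (hnm : (n <= m)%N) :
  exists (A : finType) (S : finType) (P : S -> R) (Cw Cl : S -> {set A}),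
    is_pmf P /\
    (forall s : S, (m <= #|Cw s|)%N /\ (#|Cl s| <= n)%N) /\
    (forall M : agent -> option A -> option A -> R, is_policy M ->
       n%:R / (2 * m%:R) <= piddg_error P Cw Cl M).
Proof.
case: m hnm => [|k] hnk; first by case: n hn hnk.
exists 'I_k.+1, 'I_k.+1, (@Pk R k), (fun _ => [set: 'I_k.+1]%SET), (@Cl k n).
split; first exact: Pk_pmf.
split; first by move=> s; rewrite cardsT card_ord card_Cl.
move=> M hM; have [hM01 hMs] := hM.
pose N x a := M Ag2 x a.
have N01 : forall x a, 0 <= N x a <= 1 by move=> x a; exact: hM01.
have k0 : 0 < k.+1%:R :> R by rewrite ltr0n.
pose X : R := n%:R / k.+1%:R.
have X0 : 0 <= X by rewrite /X divr_ge0 // ltW.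
have X1 : X <= 1 by rewrite /X ler_pdivrMr // mul1r ler_nat.
pose v1 := game_value (@Pk R k) (@Cl k n) (fun _ => [set: 'I_k.+1]%SET) M Ag1.
pose v2 := game_value (@Pk R k) (fun _ => [set: 'I_k.+1]%SET) (@Cl k n) M Ag2.
suff key : forall e : R, 0 < e -> X <= v1 + v2 + e.
  have h := ler_addgt0Pr X (v1 + v2); move/h: key => key.
  rewrite /piddg_error -/v1 -/v2.
  have -> : n%:R / (2 * k.+1%:R) = X / 2 :> R.
    by rewrite /X invfM -!mulrA [2^-1 * _]mulrC.
  lra.
move=> e e0.
have [c [p [q [dp [dq [hq hp]]]]]] := eps_minimax None N01 e0.
have v2b : X * c <= v2.
  apply: val2_lb; [exact: Pk_pmf | exact: hM |].
  exists (tau q); split; first exact: tau_strat.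
  move=> sg1 hs1; have [s0 s1] := hs1 [set: 'I_k.+1]%SET.
  have -> : exp_payoff (@Pk R k) (fun _ => [set: 'I_k.+1]%SET) (@Cl k n) M Ag2 sg1 (tau q) =
     \sum_s @Pk R k s * \sum_x \sum_a sg1 [set: 'I_k.+1]%SET x * tau q (Cl n s) a * N x a.
    apply: eq_bigr => s _; congr (_ * _); apply: eq_bigr => x _; apply: eq_bigr => a _.
    rewrite /payoff.
    have -> : available [set: 'I_k.+1]%SET x = true by case: x => //= b; rewrite inE.
    rewrite /N; case: a => [b|] /=; last by [].
    exact: pay_helper.
  have NF0 : forall x a, 0 <= N x a by move=> x a; case/andP: (N01 x a).
  apply: (le_trans _ (liar_lb hnk dq NF0 s0)).
  apply: ler_wpM2l => //.
  rewrite -[c]mul1r -s1 mulr_suml; apply: ler_sum => x _; apply: ler_wpM2l => //.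
  by apply: (le_trans (hq x)); rewrite le_eqVlt; apply/orP; left; apply/eqP; apply: eq_bigr => a _; rewrite mulrC.
have v1b : X * (1 - (c + e)) <= v1.
  apply: val1_lb; [exact: Pk_pmf | exact: hM |].
  exists (tau p); split; first exact: tau_strat.
  move=> sg2 hs2; have [s0 s1] := hs2 [set: 'I_k.+1]%SET.
  have -> : exp_payoff (@Pk R k) (@Cl k n) (fun _ => [set: 'I_k.+1]%SET) M Ag1 (tau p) sg2 =
     \sum_s @Pk R k s * \sum_y \sum_a sg2 [set: 'I_k.+1]%SET y * tau p (Cl n s) a * M Ag1 a y.
    apply: eq_bigr => s _; congr (_ * _); rewrite exchange_big.
    apply: eq_bigr => y _; apply: eq_bigr => a _.
    rewrite /payoff.
    have -> : available [set: 'I_k.+1]%SET y = true by case: y => //= b; rewrite inE.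
    case: a => [b|] /=; last exact: swap3.
    exact: pay_helper2.
  have MF0 : forall y a, 0 <= (fun y a => M Ag1 a y) y a by move=> y a; case/andP: (hM01 Ag1 a y).
  apply: (le_trans _ (liar_lb hnk dp MF0 s0)).
  apply: ler_wpM2l => //.
  rewrite -[1 - _]mul1r -s1 mulr_suml; apply: ler_sum => y _; apply: ler_wpM2l => //.
  have -> : \sum_a p a * M Ag1 a y = 1 - \sum_a p a * N a y.
    have <- : \sum_a p a = 1 by case: dp.
    rewrite -sumrB; apply: eq_bigr => a _.
    have -> : M Ag1 a y = 1 - M Ag2 a y by rewrite -(hMs a y) addrK.
    by rewrite /N; ring.
  have := hp y; lra.
have : X * e <= e by rewrite ler_piMl // ltW.
nra.
Qed.
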